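(* There is an absolute constant $c'>0$ such that the following holds. Let $m\ge1$, $n>2m$ be integers and $\sigma_1^2,\dots,\sigma_n^2>0$. Let $L\subset G^{r}$, $|L|=2m$, consist of $2m$ arms of $G^{r}$ with the largest variances. Define $\eta_F=\binom{2m}{m-1}^{-1}$ for every $F\subset L$ with $|F|=m-1$ and $\eta_F=0$ for every other $F\subset[n]$ with $|F|=m-1$. Then \[ \sum_{M\subset[n]:|M|=m}\Big(\sum_{l\in M}\eta_{M\setminus\{l\}}\sigma_l^2\Big)\,\mathrm{Ent}\big(\{\eta_{M\setminus\{l\}}\sigma_l^2\}_{l\in M}\big)\ \ge\ c'\sum_{i\in G^{l}}\sigma_i^2\,\mathrm{Ent}(\sigma^2_{G^{r}})-\ln(2)\sum_{i\in L}\sigma_i^2 . \]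
   Context: For a nonnegative vector $a$, $\mathrm{Ent}(a)=-\sum_i\hat a_i\ln\hat a_i$ with $\hat a_i=a_i/\sum_ja_j$ and $0\ln0=0$ (a term whose vector is identically zero contributes $0$); $\sigma^2_S=(\sigma_i^2)_{i\in S}$. Let $\underline\sigma^2=\min_i\sigma_i^2$, $G_j=\{i\in[n]:2^{j-1}\le\sigma_i^2/\underline\sigma^2<2^j\}$ for $j=1,\dots,k$ covering $[n]$. $G^{l}=\bigcup_{j:|G_j|\le2m}G_j$. $G'_j=G_j$ if $|G_j|\le2m$, otherwise $G'_j\subset G_j$ with $|G'_j|=2m$; $G^{r}=\bigcup_jG'_j$, the choices made to maximize $\mathrm{Ent}(\sigma^2_{G^{r}})$. (Under $n>2m$ one has $|G^{r}|\ge2m$, so $L$ exists.) *)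

(* Defs.v *)
(* over Stdlib's concrete reals R (a realType via Rstruct),
   so that the absolute constant c' can be quantified before everything else. *)
From HB Require Import structures.
From mathcomp Require Import all_boot all_order all_algebra.
From mathcomp Require Import boolp reals Rstruct exp.

Set Implicit Arguments.
Unset Strict Implicit.
Unset Printing Implicit Defensive.
Import Order.TTheory GRing.Theory Num.Theory.
Local Open Scope ring_scope.

Notation R := Rdefinitions.R.

Definition xlnx (x : R) : R := if x == 0 then 0 else x * ln x.

Definition Ent {n : nat} (S : {set 'I_n}) (a : 'I_n -> R) : R :=
  let s := \sum_(i in S) a i in
  if s == 0 then 0 else - \sum_(i in S) xlnx (a i / s).

(* underline sigma^2 = min_i sigma_i^2 (the list is nonempty when n > 0) *)
Definition smin {n : nat} (s : 'I_n -> R) : R :=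
  let l := [seq s i | i <- enum 'I_n] in
  \big[Num.min/head 0 l]_(x <- l) x.

Definition Grp {n : nat} (s : 'I_n -> R) (j : nat) : {set 'I_n} :=
  [set i | (2 ^+ j.-1 <= s i / smin s) && (s i / smin s < 2 ^+ j)].

Definition Gleft {n : nat} (m : nat) (s : 'I_n -> R) : {set 'I_n} :=
  [set i | `[< exists j : nat, [/\ (0 < j)%N, i \in Grp s j & (#|Grp s j| <= 2 * m)%N] >]].

(* Gr is an admissible choice of G^r = union of G'_j, where G'_j = G_j if
   |G_j| <= 2m and otherwise G'_j is a subset of G_j of size 2m. *)
Definition admissibleGr {n : nat} (m : nat) (s : 'I_n -> R) (Gr : {set 'I_n}) : Prop :=
  (forall i, i \in Gr -> exists j : nat, (0 < j)%N /\ i \in Grp s j) /\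
  (forall j : nat, (0 < j)%N ->
     ((#|Grp s j| <= 2 * m)%N -> Gr :&: Grp s j = Grp s j) /\
     ((2 * m < #|Grp s j|)%N -> #|Gr :&: Grp s j| = (2 * m)%N)).

Definition eta {n : nat} (m : nat) (L F : {set 'I_n}) : R :=
  if (F \subset L) && (#|F| == m.-1) then ('C(2 * m, m.-1))%:R^-1 else 0.

Definition lhs7 {n : nat} (m : nat) (s : 'I_n -> R) (L : {set 'I_n}) : R :=
  \sum_(M : {set 'I_n} | #|M| == m)
     (\sum_(l in M) eta m L (M :\ l) * s l) * Ent M (fun l => eta m L (M :\ l) * s l).

(* Main.v *)
Require Import Defs.
From HB Require Import structures.
From mathcomp Require Import all_boot all_order all_algebra.
From mathcomp Require Import boolp reals Rstruct exp.
From mathcomp.algebra_tactics Require Import ring lra.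
From mathcomp Require Import zify.
Import Order.TTheory GRing.Theory Num.Theory.
Local Open Scope ring_scope.

Lemma lnsub (a b : R) : 0 < a -> 0 < b -> ln a - ln b <= a / b - 1.
Proof.
move=> a0 b0; rewrite -ln_div ?posrE //.
have := @le_ln1Dx _ (a / b - 1); rewrite [1 + _]addrC subrK; apply.
have : 0 < a / b by apply: divr_gt0.
lra.
Qed.

Lemma Ent_scale {n} (A : {set 'I_n}) (a : 'I_n -> R) (c : R) : 0 < c ->
  Ent A (fun l => c * a l) = Ent A a.
Proof.
move=> c0; rewrite /Ent -mulr_sumr mulf_eq0 (gt_eqF c0) /=.
case: eqP => // _; congr (- _); apply: eq_bigr => i _.
by rewrite invfM mulrACA divff ?mul1r // gt_eqF.
Qed.

Lemma Ent_ge0 {n} (A : {set 'I_n}) (a : 'I_n -> R) :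
  (forall i, i \in A -> 0 <= a i) -> 0 <= Ent A a.
Proof.
move=> a0; rewrite /Ent; case: eqP => // /eqP S0.
have Sge : 0 <= \sum_(i in A) a i by apply: sumr_ge0.
have Sgt : 0 < \sum_(i in A) a i by rewrite lt_def S0.
rewrite oppr_ge0; apply: sumr_le0 => i iA.
rewrite /xlnx; case: eqP => // /eqP p0.
have p_ge : 0 <= a i / \sum_(i in A) a i by apply: divr_ge0 => //; exact: a0.
have p1 : a i / \sum_(i in A) a i <= 1.
  rewrite ler_pdivrMr // mul1r (bigD1 i) //= lerDl; apply: sumr_ge0 => j /andP[jA _]; exact: a0.
apply: mulr_ge0_le0 => //; exact: ln_le0.
Qed.

Lemma entH {n} (A : {set 'I_n}) (a : 'I_n -> R) :
  (forall i, i \in A -> 0 < a i) ->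
  (\sum_(i in A) a i) * Ent A a = \sum_(i in A) a i * (ln (\sum_(j in A) a j) - ln (a i)).
Proof.
move=> a0; rewrite /Ent; case: eqP => [S0|/eqP S0].
  have := @psumr_eq0P _ _ (mem A) a (fun i iA => ltW (a0 i iA)) S0 => H.
  rewrite mulr0 big1 // => i iA; by have := a0 i iA; rewrite H // ltxx.
have Sge : 0 <= \sum_(i in A) a i by apply: sumr_ge0 => i iA; exact: ltW (a0 i iA).
have Sgt : 0 < \sum_(i in A) a i by rewrite lt_def S0.
rewrite mulrN mulr_sumr -sumrN; apply: eq_bigr => i iA.
have ai := a0 i iA.
rewrite /xlnx mulf_eq0 invr_eq0 (gt_eqF ai) (gt_eqF Sgt) /= ln_div ?posrE //.
rewrite mulrA mulrCA divff ?mulr1; last by rewrite gt_eqF.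
lra.
Qed.

Lemma ln2_ge0 : 0 <= ln (2 : R).
Proof. apply: ln_ge0; lra. Qed.

Lemma binent (x y : R) : 0 <= x -> 0 <= y ->
  x * (ln (x + y) - ln x) + y * (ln (x + y) - ln y) <= (x + y) * ln 2.
Proof.
move=> x0 y0; have l2 := ln2_ge0.
have [->|xn0] := eqVneq x 0.
  rewrite mul0r add0r add0r subrr mulr0; exact: mulr_ge0.
have [->|yn0] := eqVneq y 0.
  rewrite mul0r addr0 addr0 subrr mulr0; exact: mulr_ge0.
have xp : 0 < x by rewrite lt_def xn0.
have yp : 0 < y by rewrite lt_def yn0.
have h1 := lnsub _ _ (addr_gt0 xp yp) (mulr_gt0 (ltr0n _ 2) xp).
have h2 := lnsub _ _ (addr_gt0 xp yp) (mulr_gt0 (ltr0n _ 2) yp).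
rewrite lnM ?posrE // in h1; rewrite lnM ?posrE // in h2.
have h1' := ler_wpM2l (ltW xp) h1.
have h2' := ler_wpM2l (ltW yp) h2.
have e1 : x * ((x + y) / (2%:R * x) - 1) = (x + y) / 2 - x.
  by field; rewrite xn0 /=; lra.
have e2 : y * ((x + y) / (2%:R * y) - 1) = (x + y) / 2 - y.
  by field; rewrite yn0 /=; lra.
rewrite e1 in h1'; rewrite e2 in h2'.
have -> : (x + y) * ln 2 = x * ln 2 + y * ln 2 by ring.
have E : x * (ln (x + y) - ln x) + y * (ln (x + y) - ln y) =
  (x * ln 2 + y * ln 2) + (x * (ln (x + y) - (ln 2%:R + ln x)) + y * (ln (x + y) - (ln 2%:R + ln y))).
  by ring.
rewrite E; lra.
Qed.

Definition SS {n} (s : 'I_n -> R) (A : {set 'I_n}) := \sum_(i in A) s i.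
Definition TT {n} (s : 'I_n -> R) (A : {set 'I_n}) := \sum_(i in A) s i * ln (s i).
Definition HH {n} (s : 'I_n -> R) (A : {set 'I_n}) :=
  \sum_(i in A) s i * (ln (\sum_(j in A) s j) - ln (s i)).

Lemma sum_lin {n} (s : 'I_n -> R) (A : {set 'I_n}) c :
  \sum_(i in A) s i * (c - ln (s i)) = SS s A * c - TT s A.
Proof. rewrite /SS /TT mulr_suml -sumrB; apply: eq_bigr => i _; ring. Qed.

Lemma HHE {n} (s : 'I_n -> R) A : HH s A = SS s A * ln (SS s A) - TT s A.
Proof. by rewrite /HH sum_lin. Qed.

Lemma sum_split {n} (F : 'I_n -> R) (L M : {set 'I_n}) : M \subset L ->
  \sum_(i in L) F i = \sum_(i in M) F i + \sum_(i in L :\: M) F i.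
Proof.
move=> ML; rewrite (bigID (mem M)) /=; congr (_ + _); apply: eq_bigl => i.
  by apply/idP/idP => [/andP[]//|iM]; rewrite iM (subsetP ML).
by rewrite !inE andbC.
Qed.

Lemma Hsplit {n} (s : 'I_n -> R) (L M : {set 'I_n}) : (forall i, 0 < s i) -> M \subset L ->
  HH s L <= HH s M + HH s (L :\: M) + ln 2 * SS s L.
Proof.
move=> sp ML; rewrite !HHE.
have eS : SS s L = SS s M + SS s (L :\: M) by rewrite /SS (sum_split _ _ _ ML).
have eT : TT s L = TT s M + TT s (L :\: M) by rewrite /TT (sum_split _ _ _ ML).
have h := @binent (SS s M) (SS s (L :\: M)) (sumr_ge0 _ (fun i _ => ltW (sp i))) (sumr_ge0 _ (fun i _ => ltW (sp i))).
rewrite eS eT; move: h; rewrite -/(SS s M) -/(SS s (L :\: M)) => h.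
have E : (SS s M + SS s (L :\: M)) * ln (SS s M + SS s (L :\: M)) =
  SS s M * (ln (SS s M + SS s (L :\: M)) - ln (SS s M)) + SS s (L :\: M) * (ln (SS s M + SS s (L :\: M)) - ln (SS s (L :\: M)))
  + SS s M * ln (SS s M) + SS s (L :\: M) * ln (SS s (L :\: M)) by ring.
rewrite E; lra.
Qed.

Lemma Ent_eq {n} (A : {set 'I_n}) (a b : 'I_n -> R) : {in A, a =1 b} -> Ent A a = Ent A b.
Proof.
move=> h; rewrite /Ent (eq_bigr _ h); congr (if _ then _ else - _).
by apply: eq_bigr => i iA; rewrite h.
Qed.

Lemma HH_ge0 {n} (s : 'I_n -> R) A : (forall i, 0 < s i) -> 0 <= HH s A.
Proof.
move=> sp; rewrite /HH -entH; last by move=> i _; exact: sp.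
apply: mulr_ge0; first by apply: sumr_ge0 => i _; exact: ltW.
by apply: Ent_ge0 => i _; exact: ltW.
Qed.

Lemma lhs_bound n m (s : 'I_n -> R) (L : {set 'I_n}) : (1 <= m)%N -> (forall i, 0 < s i) ->
  #|L| = (2 * m)%N -> (HH s L - ln 2 * SS s L) / 2 <= lhs7 m s L.
Proof.
move=> m1 sp cL.
set c := (('C(2 * m, m.-1))%:R^-1 : R).
have c0 : 0 < c by rewrite invr_gt0 ltr0n bin_gt0; lia.
set P := fun M : {set 'I_n} => (#|M| == m) && (M \subset L).
have step1 : \sum_(M | P M) c * HH s M <= lhs7 m s L.
  rewrite /lhs7 [X in _ <= X](bigID (fun M : {set 'I_n} => M \subset L)) /=.
  rewrite -[X in X <= _]addr0. apply: lerD.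
    apply: ler_sum => M /andP[/eqP cM ML].
    have eta_c : forall l, l \in M -> Defs.eta m L (M :\ l) = c.
      move=> l lM; rewrite /Defs.eta (subset_trans (subD1set M l) ML) /=.
      have hc : #|M :\ l| = m.-1 by have := cardsD1 l M; rewrite lM cM /=; lia.
      by rewrite hc eqxx.
    rewrite (eq_bigr (fun l => c * s l)); last by move=> l lM; rewrite eta_c.
    rewrite (@Ent_eq _ M _ (fun l => c * s l)); last by move=> l lM; rewrite eta_c.
    by rewrite Ent_scale // -mulr_sumr -mulrA entH.
  apply: sumr_ge0 => M _; apply: mulr_ge0.
    apply: sumr_ge0 => l _; apply: mulr_ge0; last exact: ltW.
    by rewrite /Defs.eta; case: ifP => _; [exact: ltW|].
  apply: Ent_ge0 => l _; apply: mulr_ge0; last exact: ltW.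
  by rewrite /Defs.eta; case: ifP => _; [exact: ltW|].
have refl : \sum_(M | P M) HH s M = \sum_(M | P M) HH s (L :\: M).
  pose h M := (L :\: M) :|: (M :\: L).
  have hK : involutive h.
    move=> M; apply/setP => x; rewrite !inE.
    by case: (x \in L); case: (x \in M).
  have PhP : forall M, P M -> P (h M) /\ h M = L :\: M.
    move=> M /andP[/eqP cM ML].
    have e : h M = L :\: M.
      apply/setP => x; rewrite !inE; move: (subsetP ML x).
      by case: (x \in M); case: (x \in L) => //= /(_ isT).
    split => //; rewrite /P e subsetDl andbT cardsD (setIidPr ML) cL cM.
    apply/eqP; lia.
  have Peq : forall M, P (h M) = P M.
    move=> M; apply/idP/idP => H; last exact: (PhP _ H).1.
    rewrite -(hK M); exact: (PhP _ H).1.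
  rewrite (reindex_inj (inv_inj hK)) /= (eq_bigl _ _ Peq).
  by apply: eq_bigr => M PM; rewrite (PhP M PM).2.
have cardP : #|P| = 'C(2 * m, m).
  rewrite -cL -cards_draws; apply: eq_card => M; by rewrite inE /P andbC.
have step2 : ('C(2 * m, m))%:R * (HH s L - ln 2 * SS s L) <= 2 * \sum_(M | P M) HH s M.
  have -> : 2 * \sum_(M | P M) HH s M = \sum_(M | P M) HH s M + \sum_(M | P M) HH s M by ring.
  rewrite {2}refl -big_split /=.
  rewrite -cardP -sumr_const mulr_suml.
  apply: ler_sum => M /andP[_ ML].
  have := @Hsplit _ s L M sp ML; rewrite mul1r; lra.
have binle : ('C(2 * m, m.-1) <= 'C(2 * m, m))%N.
  have := mul_bin_left (2 * m) m.-1.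
  have -> : m.-1.+1 = m by lia.
  have -> : (2 * m - m.-1 = m.+1)%N by lia.
  move=> e; rewrite -(@leq_pmul2l m.+1) // -e leq_pmul2r ?bin_gt0; lia.
have cC : 1 <= c * ('C(2 * m, m))%:R.
  rewrite /c mulrC ler_pdivlMr ?mul1r ?ler_nat //; by rewrite ltr0n bin_gt0; lia.
have Y0 : 0 <= \sum_(M | P M) HH s M by apply: sumr_ge0 => M _; exact: HH_ge0.
rewrite -mulr_sumr in step1.
set X := HH s L - ln 2 * SS s L in step2 *.
set Y := \sum_(M | P M) HH s M in step2 Y0 refl step1.
set C0 := ('C(2 * m, m))%:R in step2 cC.
have C00 : 0 <= C0 by rewrite /C0 ler0n.
have cY0 : 0 <= c * Y by apply: mulr_ge0 => //; exact: ltW.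
have [X0|X0] := leP 0 X; last lra.
have h1 := ler_wpM2l (ltW c0) step2.
have h2 : X <= (c * C0) * X by rewrite -{1}[X]mul1r; apply: ler_wpM2r.
have e : c * (C0 * X) = (c * C0) * X by ring.
have e2 : c * (2 * Y) = 2 * (c * Y) by ring.
rewrite e e2 in h1; lra.
Qed.

Lemma smin_pos n (s : 'I_n -> R) (i0 : 'I_n) : (forall i, 0 < s i) -> 0 < smin s.
Proof.
move=> sp; rewrite /smin; set l := [seq s i | i <- enum 'I_n].
have lpos : forall x, x \in l -> 0 < x by move=> x /mapP[i _ ->].
have : s i0 \in l by apply: map_f; rewrite mem_enum.
move: lpos; case: l => [|x l'] // lpos _ /=.
rewrite big_seq; apply: (big_ind (fun y => 0 < y)).
- by apply: lpos; rewrite mem_head.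
- by move=> a b a0 b0; rewrite lt_min a0 b0.
- by move=> y; apply: lpos.
Qed.

Lemma grp_bounds n (s : 'I_n -> R) j i : 0 < smin s -> i \in Grp s j ->
  2 ^+ j.-1 * smin s <= s i /\ s i < 2 ^+ j * smin s.
Proof.
move=> P0; rewrite inE => /andP[a b]; split.
  by rewrite -ler_pdivlMr.
by rewrite -ltr_pdivrMr.
Qed.

Lemma cover_sum n m j0 (Rs Gr : {set 'I_n}) (grp : nat -> {set 'I_n}) (f : 'I_n -> R) (g : nat -> R) :
  (forall j, (0 < j)%N -> (#|Gr :&: grp j| <= 2 * m)%N) -> Rs \subset Gr ->
  (forall r, r \in Rs -> 0 <= f r) ->
  (forall r, r \in Rs -> exists j : 'I_j0, r \in grp j.+1) ->
  (forall (j : 'I_j0) r, r \in Rs -> r \in grp j.+1 -> f r <= g j) ->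
  (forall j, 0 <= g j) ->
  \sum_(r in Rs) f r <= (2 * m)%:R * \sum_(j < j0) g j.
Proof.
move=> hcard RG f0 cover fg g0.
apply: (@le_trans _ _ (\sum_(r in Rs) \sum_(j < j0) (if r \in grp j.+1 then f r else 0))).
  apply: ler_sum => r rR; have [j rj] := cover r rR.
  rewrite (bigD1 j) //= rj lerDl; apply: sumr_ge0 => k _; case: ifP => // _; exact: f0.
rewrite exchange_big mulr_sumr; apply: ler_sum => j _.
rewrite -big_mkcondr /=.
apply: (@le_trans _ _ (\sum_(r in Rs | r \in grp j.+1) g j)).
  by apply: ler_sum => r /andP[rR rj]; exact: fg.
rewrite sumr_const -[g j *+ _]mulr_natl; apply: ler_wpM2r => //; rewrite ler_nat.
apply: (leq_trans _ (hcard j.+1 isT)); apply: subset_leq_card.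
by apply/subsetP => r; rewrite !inE => /andP[rR rj]; rewrite (subsetP RG r rR) rj.
Qed.

Lemma geo n : (\sum_(j < n) 2 ^ j.+1 <= 2 ^ n.+1)%N.
Proof.
elim: n => [|n IH]; first by rewrite big_ord0.
rewrite big_ord_recr /=; move: IH; set X := \sum_(i < n) _; rewrite (expnS 2 n.+1); lia.
Qed.

Lemma arith n : (\sum_(j < n) 2 ^ j.+1 * (n - j) <= 2 ^ n.+2)%N.
Proof.
elim: n => [|n IH]; first by rewrite big_ord0.
rewrite big_ord_recr /= subSn // subnn muln1.
rewrite (eq_bigr (fun j : 'I_n => 2 ^ j.+1 * (n - j) + 2 ^ j.+1)%N); last first.
  by move=> j _; rewrite subSn ?mulnS 1?addnC // ltnW.
rewrite big_split /=; have := geo n; move: IH; rewrite (expnS 2 n.+2) (expnS 2 n.+1); set A := \sum_(i < n) (2 ^ i.+1 * (n - i))%N; set B := \sum_(i < n) (2 ^ i.+1)%N; lia.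
Qed.

Lemma HL_lower n (s : 'I_n -> R) (L : {set 'I_n}) mu : (0 < #|L|)%N -> 0 < mu ->
  (forall i, i \in L -> mu <= s i) ->
  (#|L|)%:R * mu * ln (#|L|%:R) <= HH s L.
Proof.
move=> L0 mu0 hmu.
have sp : forall i, i \in L -> 0 < s i by move=> i iL; exact: lt_le_trans (hmu i iL).
set N := (#|L|)%:R : R.
have N0 : 0 < N by rewrite ltr0n.
set S := \sum_(j in L) s j.
have [x xL] : exists x, x \in L by apply/card_gt0P.
have S0 : 0 < S.
  rewrite /S (bigD1 x) //=; apply: lt_le_trans (sp x xL) _; rewrite lerDl.
  by apply: sumr_ge0 => i /andP[iL _]; exact: ltW (sp i iL).
have siS : forall i, i \in L -> s i <= S.
  move=> i iL; rewrite /S (bigD1 i) //= lerDl.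
  by apply: sumr_ge0 => j /andP[jL _]; exact: ltW (sp j jL).
have step1 : \sum_(i in L) mu * (ln S - ln (s i)) <= HH s L.
  apply: ler_sum => i iL; apply: ler_wpM2r; last exact: hmu.
  by rewrite subr_ge0 ler_ln ?posrE // ?siS // sp.
have step2 : \sum_(i in L) (ln N + ln (s i) - ln S) <= \sum_(i in L) (N * s i / S - 1).
  apply: ler_sum => i iL; rewrite -lnM ?posrE ?sp //; apply: lnsub => //.
  by apply: mulr_gt0 => //; exact: sp.
rewrite !big_split /= !sumr_const -mulr_suml -mulr_sumr -/S in step2.
have e : N * S / S = N by rewrite -mulrA divff ?mulr1 // gt_eqF.
rewrite e in step2.
rewrite -mulr_sumr sumrB sumr_const in step1.
set TL := \sum_(i in L) ln (s i) in step1 step2.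
have xn : forall y : R, y *+ #|L| = y * N by move=> y; rewrite /N mulr_natr.
rewrite !xn in step1 step2.
have h2 : N * ln N <= N * ln S - TL by lra.
have h3 := ler_wpM2l (ltW mu0) h2.
have e2 : mu * (ln S * N - TL) = mu * (N * ln S - TL) by ring.
have e3 : N * mu * ln N = mu * (N * ln N) by ring.
rewrite e2 in step1; rewrite e3; lra.
Qed.

Lemma ln2_le1 : ln (2 : R) <= 1.
Proof. have := @lnsub 2 1 (ltr0Sn _ 1) ltr01; rewrite ln1 divr1; lra. Qed.

Lemma ln4_le3 : ln (4 : R) <= 3.
Proof. have := @lnsub 4 1 (ltr0Sn _ 3) ltr01; rewrite ln1 divr1; lra. Qed.

Lemma gr_bound n m (s : 'I_n -> R) (Gr L : {set 'I_n}) : (1 <= m)%N -> (forall i, 0 < s i) ->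
  admissibleGr m s Gr -> L \subset Gr -> #|L| = (2 * m)%N ->
  (forall i j, i \in L -> j \in Gr :\: L -> s j <= s i) ->
  HH s Gr <= 40 * (HH s L + SS s L).
Proof.
move=> m1 sp [adm1 adm2] LGr cL hLR.
have [x xL] : exists x, x \in L by apply/card_gt0P; rewrite cL; lia.
have P0 := @smin_pos n s x sp; set P := smin s in P0.
case: (@arg_minP _ _ _ x (mem L) s xL) => i0 i0L hmin.
set mu := s i0; have mu0 : 0 < mu := sp i0.
have [j0 [j0p i0g]] := adm1 i0 (subsetP LGr i0 i0L).
case: j0 j0p i0g => // k _ i0g.
have [muk1 muk2] := @grp_bounds _ _ _ _ P0 i0g; rewrite /= -/P -/mu in muk1 muk2.
set Rs := Gr :\: L.
have hcard : forall j, (0 < j)%N -> (#|Gr :&: Grp s j| <= 2 * m)%N.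
  move=> j jp; have [h1 h2] := adm2 j jp.
  by case: (leqP #|Grp s j| (2 * m)) => h; [rewrite (h1 h) | rewrite (h2 h)].
have RGr : Rs \subset Gr by apply: subsetDl.
have rmu : forall r, r \in Rs -> s r <= mu by move=> r rR; exact: hLR.
have cover : forall r, r \in Rs -> exists j : 'I_k.+1, r \in Grp s j.+1.
  move=> r rR; have [j [jp rj]] := adm1 r (subsetP RGr r rR).
  case: j jp rj => // j _ rj; have [a b] := @grp_bounds _ _ _ _ P0 rj.
  have jk : (j < k.+1)%N.
    have : 2 ^+ j * P < 2 ^+ k.+1 * P.
      by apply: le_lt_trans a (le_lt_trans (rmu r rR) muk2).
    by rewrite ltr_pM2r // -!natrX ltr_nat ltn_exp2l.
  by exists (Ordinal jk).
have B3 : SS s Rs <= (2 * m)%:R * (4 * mu).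
  have := @cover_sum n m k.+1 Rs Gr (Grp s) s (fun j => (2 ^ j.+1)%:R * P) hcard RGr
    (fun r _ => ltW (sp r)) cover.
  move=> /(_ _ _) H; apply: le_trans (H _ _) _.
  - move=> j r rR rj; have [_ b] := @grp_bounds _ _ _ _ P0 rj; rewrite natrX; exact: ltW.
  - move=> j; apply: mulr_ge0 => //; exact: ltW.
  apply: ler_wpM2l => //; rewrite -mulr_suml -natr_sum.
  apply: (@le_trans _ _ ((2 ^ k.+2)%:R * P)); first by apply: ler_wpM2r; [exact: ltW | rewrite ler_nat geo].
  rewrite !expnS !natrM -mulrA mulrA natrX; lra.
have B4 : SS s Rs * ln mu - TT s Rs <= (2 * m)%:R * (8 * mu).
  rewrite -(sum_lin s Rs (ln mu)).
  have := @cover_sum n m k.+1 Rs Gr (Grp s) (fun r => s r * (ln mu - ln (s r)))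
    (fun j => ((2 ^ j.+1 * (k.+1 - j))%N)%:R * (P * ln 2)) hcard RGr.
  move=> H; apply: le_trans (H _ cover _ _) _.
  - move=> r rR; apply: mulr_ge0; first exact: ltW.
    by rewrite subr_ge0 ler_ln ?posrE //; exact: rmu.
  - move=> j r rR rj; have [a b] := @grp_bounds _ _ _ _ P0 rj.
    have sr0 := sp r.
    have lnb : ln mu - ln (s r) <= (k.+1 - j)%:R * ln 2.
      have h1 : ln mu <= ln (2 ^+ k.+1 * P).
        rewrite ler_ln ?posrE //; [exact: ltW | apply: mulr_gt0 => //; exact: exprn_gt0].
      have h2 : ln (2 ^+ j * P) <= ln (s r).
        rewrite ler_ln ?posrE //; apply: mulr_gt0 => //; exact: exprn_gt0.
      rewrite !lnM ?posrE ?exprn_gt0 // !lnXn // in h1 h2.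
      rewrite natrB; last exact: ltnW (ltn_ord j).
      rewrite mulrBl !mulr_natl; lra.
    have lnb0 : 0 <= ln mu - ln (s r) by rewrite subr_ge0 ler_ln ?posrE //; exact: rmu.
    apply: le_trans (ler_pM (ltW sr0) lnb0 (ltW b) lnb) _.
    rewrite natrM natrX le_eqVlt; apply/orP; left; apply/eqP; rewrite /P; ring.
  - move=> j; apply: mulr_ge0; first exact: ler0n.
    apply: mulr_ge0; [exact: ltW | exact: ln2_ge0].
  apply: ler_wpM2l => //; rewrite -mulr_suml -natr_sum.
  apply: (@le_trans _ _ ((2 ^ k.+3)%:R * (P * ln 2))).
    apply: ler_wpM2r; [apply: mulr_ge0; [exact: ltW | exact: ln2_ge0] | rewrite ler_nat arith //].
  have h1 := ler_wpM2r ln2_ge0 muk1.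
  have h2 := ler_wpM2l (ltW mu0) ln2_le1.
  have -> : (2 ^ k.+3)%:R = 8 * 2 ^+ k :> R by rewrite natrX !exprS; ring.
  lra.
set M2 := (2 * m)%:R : R.
have M20 : 0 < M2 by rewrite /M2 ltr0n muln_gt0 m1.
have HL := @HL_lower n s L mu (ltac:(by rewrite cL muln_gt0 m1)) mu0 hmin.
rewrite cL -/M2 in HL.
have SLb : M2 * mu <= SS s L.
  rewrite /M2 -cL mulr_natl -sumr_const; apply: ler_sum => i iL; exact: hmin.
have eS : SS s Gr = SS s L + SS s Rs by rewrite /SS (sum_split _ _ _ LGr).
have eT : TT s Gr = TT s L + TT s Rs by rewrite /TT (sum_split _ _ _ LGr).
have SL0 : 0 < SS s L by apply: lt_le_trans SLb; exact: mulr_gt0.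
have SR0 : 0 <= SS s Rs by apply: sumr_ge0 => i _; exact: ltW.
have SG0 : 0 < SS s Gr by rewrite eS; lra.
have F1 : SS s L * (ln (SS s Gr) - ln (SS s L)) <= SS s Rs.
  have := ler_wpM2l (ltW SL0) (lnsub _ _ SG0 SL0).
  have -> : SS s L * (SS s Gr / SS s L - 1) = SS s Rs.
    by rewrite mulrBr mulr1 mulrCA divff ?mulr1 ?gt_eqF // eS; ring.
  done.
have lnmuS : ln mu <= ln (SS s Gr).
  rewrite ler_ln ?posrE //; apply: le_trans (hmin i0 i0L) _.
  rewrite eS; suff : s i0 <= SS s L by lra.
  rewrite /SS (bigD1 i0) //= lerDl; apply: sumr_ge0 => i _; exact: ltW.
have F2 : SS s Rs * (ln (SS s Gr) - ln mu) <= (M2 * (4 * mu)) * (ln (SS s Gr) - ln mu).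
  by apply: ler_wpM2r => //; rewrite subr_ge0.
have A0 : 0 < M2 * (4 * mu) by apply: mulr_gt0 => //; lra.
have F3 : (M2 * (4 * mu)) * (ln (SS s Gr) - (ln M2 + ln 4 + ln mu)) <= SS s Gr - M2 * (4 * mu).
  have := ler_wpM2l (ltW A0) (lnsub _ _ SG0 A0).
  rewrite !lnM ?posrE //; try lra.
  have -> : M2 * (4 * mu) * (SS s Gr / (M2 * (4 * mu)) - 1) = SS s Gr - M2 * (4 * mu).
    by rewrite mulrBr mulr1 mulrCA divff ?mulr1 ?gt_eqF.
  by rewrite addrA.
have F8 : (M2 * mu) * ln 4 <= (M2 * mu) * 3.
  by apply: ler_wpM2l; [apply: mulr_ge0; apply: ltW | exact: ln4_le3].
rewrite !HHE eT.
set lG := ln (SS s Gr) in F1 F2 F3 lnmuS *.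
rewrite eS in F1 F2 F3 SG0 *.
have B3' : SS s Rs <= M2 * (4 * mu) by exact: B3.
have B4' : SS s Rs * ln mu - TT s Rs <= M2 * (8 * mu) by exact: B4.
have HL0 := @HH_ge0 n s L sp.
rewrite HHE in HL HL0.
clear B3 B4.
lra.
Qed.

Theorem lemma7 :
  exists c' : R, 0 < c' /\
  forall (m n : nat) (s : 'I_n -> R),
    (1 <= m)%N -> (2 * m < n)%N -> (forall i, 0 < s i) ->
    forall Gr : {set 'I_n},
      admissibleGr m s Gr ->
      (forall Gr' : {set 'I_n}, admissibleGr m s Gr' -> Ent Gr' s <= Ent Gr s) ->
    forall L : {set 'I_n},
      L \subset Gr -> #|L| = (2 * m)%N ->
      (forall i j, i \in L -> j \in Gr :\: L -> s j <= s i) ->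
      lhs7 m s L >=
        c' * (\sum_(i in Gleft m s) s i) * Ent Gr s - ln 2 * \sum_(i in L) s i.
Proof.
have l20 : 0 < ln (2 : R) by apply: ln_gt0; lra.
exists (ln 2 / 80); split; first lra.
move=> m n s m1 _ sp Gr adm _ L LGr cL hLR.
have hl := @lhs_bound n m s L m1 sp cL.
have hg := @gr_bound n m s Gr L m1 sp adm LGr cL hLR.
have HL0 := @HH_ge0 n s L sp.
have E0 : 0 <= Ent Gr s by apply: Ent_ge0 => i _; exact: ltW.
have GlGr : Gleft m s \subset Gr.
  apply/subsetP => i; rewrite inE => /asboolP [j [jp ij cj]].
  have [h1 _] := (adm.2 j jp).
  by have := h1 cj; move/setP/(_ i); rewrite inE ij andbT => ->.
have Sle : \sum_(i in Gleft m s) s i <= SS s Gr.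
  rewrite /SS (sum_split _ _ _ GlGr) lerDl; apply: sumr_ge0 => i _; exact: ltW.
have eH : SS s Gr * Ent Gr s = HH s Gr by rewrite /SS entH // => i _; exact: sp.
have h1 := ler_wpM2r E0 Sle.
rewrite eH in h1.
have h2 := ler_wpM2l (ltW l20) (ln2_le1).
have h3 := ler_wpM2r HL0 ln2_le1.
set SL := SS s L in hl hg h3 *.
rewrite -/SL.
set X := (\sum_(i in Gleft m s) s i) * Ent Gr s in h1.
have -> : ln 2 / 80 * (\sum_(i in Gleft m s) s i) * Ent Gr s = ln 2 / 80 * X by rewrite /X; ring.
have -> : \sum_(i in L) s i = SL by [].
have h4 := ler_wpM2l (ltW (divr_gt0 l20 (ltr0n _ 80))) (le_trans h1 hg).
have SL0 : 0 <= SL by apply: sumr_ge0 => i _; exact: ltW.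
have h5 := ler_wpM2l (ltW l20) SL0.
lra.
Qed.
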